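(* Let $k\ge 2$ be even and $i\in\{1,\ldots,k-1\}$ such that $\binom{k}{i}$ and $\binom{k-1}{i}$ are both odd. Then $$S=\sum_{\substack{0\le \ell\le k-i-2\\ \ell\text{ even}}}\binom{k-i}{\ell}\binom{i-2}{k-i-\ell-2}^2$$ is odd.
   Context: Convention: for integers $a,b$, $\binom{a}{b}=0$ unless $0\le b\le a$. *)

(* Defs.v *)
From mathcomp Require Import all_boot all_order all_algebra.
Set Implicit Arguments. Unset Strict Implicit. Unset Printing Implicit Defensive.

(* Binomial coefficient on integers with the paper's convention:
   binomZ a b = 0 unless 0 <= b <= a, in which case it is the usual 'C(a, b). *)
Definition binomZ (a b : int) : nat :=
  match a, b with
  | Posz a', Posz b' => 'C(a', b')
  | _, _ => 0
  end.

(* Main.v *)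
Require Import Defs.
From mathcomp Require Import all_boot all_order all_algebra.
From mathcomp Require Import zify.

Lemma even_bin n m : ~~ odd n -> odd m -> ~~ odd 'C(n, m).
Proof.
case: m => [|j] //= hn hm.
have := congr1 odd (mul_bin_diag n j).
rewrite !oddM (negbTE hn) /=.
by move/esym/andP => H; apply/negP => hc; apply: H; rewrite hm hc.
Qed.

Lemma odd_sumE (r : seq nat) (P : pred nat) F :
  odd (\sum_(l <- r | P l) F l) = \big[addb/false]_(l <- r | P l) odd (F l).
Proof. elim: r => [|x r IH]; rewrite ?big_nil // !big_cons; case: (P x) => //; by rewrite oddD IH. Qed.

Theorem mainTheorem11 (k i : nat) :
  2 <= k -> ~~ odd k -> 1 <= i <= k - 1 ->
  odd 'C(k, i) -> odd 'C(k - 1, i) ->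
  odd (\sum_(0 <= l < k - i - 1 | ~~ odd l)
         binomZ (Posz (k - i)) (Posz l) *
         binomZ (Posz i - 2)%R (Posz k - Posz i - Posz l - 2)%R ^ 2).
Proof.
move=> hk ek /andP[hi1 hi2] oki ok1i.
have ei : ~~ odd i.
  by apply/negP => oi; move: (@even_bin _ _ ek oi); rewrite oki.
have hi : 2 <= i by case: i hi1 ei {hi2 oki ok1i} => [|[|]].
set m := k - i.
have em : ~~ odd m by rewrite /m oddB ?(negbTE ek) ?(negbTE ei) //; lia.
have hm : 2 <= m.
  have : 1 <= m by rewrite /m; lia.
  by move: em; case: m => [|[|]].
rewrite big_nat_cond (eq_bigr (fun l => 'C(m, l) * 'C(i - 2, m - 2 - l) ^ 2)); last first.
  move=> l /andP[/andP[_ hl] _].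
  have -> : (Posz i - 2 = Posz (i - 2))%R by lia.
  have -> : (Posz k - Posz i - Posz l - 2 = Posz (m - 2 - l))%R by rewrite /m; lia.
  by [].
rewrite -big_nat_cond odd_sumE.
have full : \big[addb/false]_(0 <= l < m - 1 | ~~ odd l) odd ('C(m, l) * 'C(i - 2, m - 2 - l) ^ 2)
   = \big[addb/false]_(0 <= l < m - 1) odd ('C(m, l) * 'C(i - 2, m - 2 - l)).
  rewrite [RHS](bigID (fun l => ~~ odd l)) /=.
  rewrite [X in _ = _ (+) X]big1; last first.
    by move=> l /negPn ol; rewrite oddM (negbTE (@even_bin _ _ em ol)).
  rewrite addbF; apply: eq_bigr => l _; by rewrite !oddM ?oddX ?andbb.
rewrite full -odd_sumE.
have -> : m - 1 = (m - 2).+1 by lia.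
rewrite big_mkord binomial.Vandermonde.
have -> : m + (i - 2) = k - 2 by rewrite /m; lia.
have -> : m - 2 = (k - 2) - i by rewrite /m; lia.
rewrite bin_sub; last by lia.
have hk1 : k - 1 = (k - 2).+1 by lia.
move: ok1i; rewrite hk1.
case: i hi ei {hi1 hi2 oki full m em hm hk1} => [|j] // _ ej.
rewrite binS oddD.
have ek2 : ~~ odd (k - 2) by rewrite oddB ?(negbTE ek).
by rewrite (negbTE (@even_bin _ _ ek2 (_ : odd j))) ?addbF //; move: ej => /= /negPn.
Qed.
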